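(* Let $A=[a_1\ \dots\ a_m]^T\in Mat(m,1,\mathfrak m)$ with $m\le s$, and let $\Theta$ be a presentation matrix (with $m$ rows, whose columns generate $\tilde T^e_A(GA)$) of the $R$-module $M_{m,1}/\tilde T^e_A(GA)$; for instance the $m\times(m^2+s)$ matrix whose first $s$ columns are the columns of $Jac(A)$ followed by the $m^2$ columns $a_q e_p$ ($p,q=1,\dots,m$, $e_p$ the standard basis of $R^m$). Then $$\sqrt{I_1(A)+I_m(Jac(A))}=\sqrt{I_m(\Theta)}=\sqrt{\mathrm{Ann}_R\big(M_{m,1}/\tilde T^e_A(GA)\big)}.$$ In particular, $\dim_K M_{m,1}/\tilde T^e_A(GA)<\infty$ if and only if $\dim_K R/(I_1(A)+I_m(Jac(A)))<\infty$.
   Context: $K$ is a field, $R=K[[x_1,\dots,x_s]]$, $\mathfrak m=\langle x_1,\dots,x_s\rangle$, $M_{m,1}=Mat(m,1,R)\cong R^m$. For $A=[a_1\ \dots\ a_m]^T$, $Jac(A)=[\partial a_i/\partial x_j]\in Mat(m,s,R)$, $I_1(A)=\langle a_1,\dots,a_m\rangle$, and $I_t(\cdot)$ denotes the ideal of $t\times t$ minors. The extended tangent image is the submodule $\tilde T^e_A(GA):=I_1(A)\,R^m+\text{(the }R\text{-submodule of }R^m\text{ generated by the columns of }Jac(A))$. *)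

(* Defs.v *)
(* The formal power series ring K[[x_1..x_s]] is modelled
   concretely: a series is its coefficient function on monomials
   (exponent vectors 'I_s -> nat). *)
From HB Require Import structures.
From mathcomp Require Import all_boot all_order all_fingroup all_algebra.
Set Implicit Arguments. Unset Strict Implicit. Unset Printing Implicit Defensive.
Import GRing.Theory.
Local Open Scope ring_scope.

Section PS.
Variables (K : fieldType) (s : nat).

Definition mon := {ffun 'I_s -> nat}.
Definition ps := mon -> K.

Definition mdeg (a : mon) : nat := (\max_(i < s) a i)%N.

Definition ps0 : ps := fun _ => 0.
Definition ps_const (c : K) : ps := fun a => if a == [ffun _ => 0%N] then c else 0.
Definition ps1 : ps := ps_const 1.
Definition ps_add (f g : ps) : ps := fun a => f a + g a.
Definition ps_opp (f : ps) : ps := fun a => - f a.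
Definition ps_scale (c : K) (f : ps) : ps := fun a => c * f a.
(* Cauchy product: (fg)_a = sum_{b <= a} f_b g_{a-b} *)
Definition ps_mul (f g : ps) : ps := fun a =>
  \sum_(b : {ffun 'I_s -> 'I_(mdeg a).+1} | [forall i, (b i <= a i)%N])
     f [ffun i => nat_of_ord (b i)] * g [ffun i => (a i - b i)%N].
Definition ps_exp (f : ps) (n : nat) : ps := iter n (ps_mul f) ps1.
Definition ps_var (j : 'I_s) : ps := fun a => if a == [ffun i => nat_of_bool (i == j)] then 1 else 0.
Definition pderiv (j : 'I_s) (f : ps) : ps :=
  fun a => (a j).+1%:R * f [ffun i => (a i + nat_of_bool (i == j))%N].

Definition in_maxideal (f : ps) : Prop := f [ffun _ => 0%N] = 0.

Definition ideal_gen (gens : seq ps) : ps -> Prop := fun f =>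
  exists c : 'I_(size gens) -> ps,
    f = \big[ps_add/ps0]_(i < size gens) ps_mul (c i) (nth ps0 gens i).
Definition ideal_sum (I J : ps -> Prop) : ps -> Prop := fun f =>
  exists g h, I g /\ J h /\ f = ps_add g h.
Definition radical (I : ps -> Prop) : ps -> Prop := fun f => exists n, I (ps_exp f n).

Definition ps_det (t : nat) (M : 'M[ps]_t) : ps :=
  \big[ps_add/ps0]_(sigma : 'S_t)
     ps_mul (ps_const (if odd_perm sigma then -1 else 1))
            (\big[ps_mul/ps1]_(i < t) M i (sigma i)).

Definition minors (t m n : nat) (M : 'M[ps]_(m, n)) : seq ps :=
  [seq ps_det (\matrix_(i < t, j < t) M (f i) (g j))
     | f : {ffun 'I_t -> 'I_m} <- enum {ffun 'I_t -> 'I_m}, g : {ffun 'I_t -> 'I_n} <- enum {ffun 'I_t -> 'I_n}].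
Definition I_t (t m n : nat) (M : 'M[ps]_(m, n)) : ps -> Prop := ideal_gen (minors t M).

(* A = [a_1 ... a_m]^T as a column *)
Definition I_1 (m : nat) (A : 'I_m -> ps) : ps -> Prop := ideal_gen [seq A i | i <- enum 'I_m].
Definition Jac (m : nat) (A : 'I_m -> ps) : 'M[ps]_(m, s) := \matrix_(i, j) pderiv j (A i).

(* vectors of R^m = M_{m,1} *)
Definition vec_add (m : nat) (v w : 'I_m -> ps) : 'I_m -> ps := fun p => ps_add (v p) (w p).
Definition vec_scale (m : nat) (r : ps) (v : 'I_m -> ps) : 'I_m -> ps := fun p => ps_mul r (v p).
Definition vec0 (m : nat) : 'I_m -> ps := fun _ => ps0.
Definition col_comb (m n : nat) (M : 'M[ps]_(m, n)) (c : 'I_n -> ps) : 'I_m -> ps :=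
  fun p => \big[ps_add/ps0]_(k < n) ps_mul (c k) (M p k).

Definition tangent_ext (m : nat) (A : 'I_m -> ps) : ('I_m -> ps) -> Prop := fun v =>
  exists (w : 'I_m -> ps) (d : 'I_s -> ps),
    (forall p, I_1 A (w p)) /\ v = vec_add w (col_comb (Jac A) d).

Definition ann_quot (m : nat) (N : ('I_m -> ps) -> Prop) : ps -> Prop :=
  fun r => forall v : 'I_m -> ps, N (vec_scale r v).

(* finite K-dimensionality of R^m / N : finitely many vectors span mod N *)
Definition vec_diff (m : nat) (v w : 'I_m -> ps) : 'I_m -> ps :=
  fun p => ps_add (v p) (ps_opp (w p)).
Definition findim_quot_mod (m : nat) (N : ('I_m -> ps) -> Prop) : Prop :=
  exists L : seq ('I_m -> ps), forall v : 'I_m -> ps,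
    exists c : 'I_(size L) -> K,
      N (vec_diff v (fun p => \big[ps_add/ps0]_(i < size L)
                                  ps_scale (c i) (nth (@vec0 m) L i p))).
Definition findim_quot_ring (I : ps -> Prop) : Prop :=
  exists L : seq ps, forall f : ps,
    exists c : 'I_(size L) -> K,
      I (ps_add f (ps_opp (\big[ps_add/ps0]_(i < size L) ps_scale (c i) (nth ps0 L i)))).

End PS.

(* Main.v *)
From HB Require Import structures.
Require Import Defs.
From mathcomp Require Import all_boot all_order all_fingroup all_algebra.
From mathcomp Require Import boolp.
From Stdlib Require Import FunctionalExtensionality.
From mathcomp Require Import zify.
Set Implicit Arguments. Unset Strict Implicit. Unset Printing Implicit Defensive.
Import GRing.Theory.
Local Open Scope ring_scope.


Ltac gen_ff := repeat match goal with |- context [@fun_of_fin ?A ?B ?P ?f ?i] =>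
  let X := fresh "X" in move: (@fun_of_fin A B P f i) => X end.
Ltac flia := try lia; repeat match goal with H : context [@fun_of_fin _ _ _ _ _] |- _ => revert H end;
  gen_ff; intros; lia.

Section Ring.
Variables (K : fieldType) (s : nat).
Local Notation ps := (ps K s).
Local Notation mon := (mon s).

Definition mle (a b : mon) : bool := [forall i, (a i <= b i)%N].
Definition madd (a b : mon) : mon := [ffun i => (a i + b i)%N].
Definition msub (a b : mon) : mon := [ffun i => (a i - b i)%N].
Definition m0 : mon := [ffun _ => 0%N].

Definition below (a : mon) : seq mon :=
  map (fun b : {ffun 'I_s -> 'I_(mdeg a).+1} => [ffun i => nat_of_ord (b i)] : mon)
    (filter (fun b : {ffun 'I_s -> 'I_(mdeg a).+1} => [forall i, (b i <= a i)%N])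
       (enum {ffun 'I_s -> 'I_(mdeg a).+1})).

Lemma mem_below a b : (b \in below a) = mle b a.
Proof.
apply/idP/idP.
  case/mapP => b' + ->; rewrite mem_filter => /andP[/forallP H _].
  by apply/forallP => i; rewrite ffunE.
move=> /forallP H; apply/mapP.
have lt : forall i, (b i < (mdeg a).+1)%N.
  move=> i; rewrite ltnS; apply: leq_trans (H i) _.
  exact: leq_bigmax.
exists [ffun i => Ordinal (lt i)].
  by rewrite mem_filter mem_enum andbT; apply/forallP => i; rewrite ffunE /=.
by apply/ffunP => i; rewrite !ffunE.
Qed.

Lemma uniq_below a : uniq (below a).
Proof.
rewrite map_inj_in_uniq; first by apply: filter_uniq; rewrite enumT; apply: index_enum_uniq.
move=> x y _ _ E.
apply/ffunP => i; apply/val_inj; have := congr1 (fun f : mon => f i) E.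
by rewrite !ffunE.
Qed.

Lemma mulE (f g : ps) a :
  ps_mul f g a = \sum_(b <- below a) f b * g (msub a b).
Proof.
rewrite /ps_mul /below big_map big_filter.
rewrite enumT [index_enum _]unlock; apply: eq_bigr => b _; congr (_ * g _).
by apply/ffunP => i; rewrite !ffunE.
Qed.

Lemma eq_big_mem (L1 L2 : seq mon) (F : mon -> K) :
  uniq L1 -> uniq L2 -> L1 =i L2 -> \sum_(x <- L1) F x = \sum_(x <- L2) F x.
Proof. by move=> u1 u2 e; apply: perm_big; apply: uniq_perm. Qed.


Lemma mleP (a b : mon) : reflect (forall i, (a i <= b i)%N) (mle a b).
Proof. exact: forallP. Qed.

Lemma sum_below_sub (a : mon) (F : mon -> K) :
  \sum_(b <- below a) F b = \sum_(b <- below a) F (msub a b).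
Proof.
rewrite -(big_map (msub a) xpredT); apply: eq_big_mem.
- exact: uniq_below.
- rewrite map_inj_in_uniq ?uniq_below // => x y; rewrite !mem_below.
  move=> /mleP hx /mleP hy E; apply/ffunP => i.
  have := congr1 (fun f : mon => f i) E; rewrite !ffunE.
  have := hx i; have := hy i; flia.
- move=> x; rewrite mem_below; apply/idP/mapP.
  + move=> /mleP hx; exists (msub a x).
      by rewrite mem_below; apply/mleP => i; rewrite ffunE; flia.
    by apply/ffunP => i; rewrite !ffunE; have := hx i; flia.
  + case=> y; rewrite mem_below => /mleP hy ->; apply/mleP => i.
    by rewrite ffunE; flia.
Qed.

Lemma ps_mulC : commutative (@ps_mul K s).
Proof.
move=> f g; apply: functional_extensionality => a; rewrite !mulE sum_below_sub.
rewrite big_seq [RHS]big_seq; apply: eq_bigr => b; rewrite mem_below => /mleP hb.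
rewrite mulrC; congr (_ * f _); congr g; apply/ffunP => i; rewrite !ffunE.
by have := hb i; flia.
Qed.

Lemma below_sub (a b : mon) (F : mon -> K) : mle b a ->
  \sum_(c <- below b) F c = \sum_(c <- below a | mle c b) F c.
Proof.
move=> /mleP hb; rewrite -[RHS]big_filter; apply: eq_big_mem.
- exact: uniq_below.
- by apply: filter_uniq; apply: uniq_below.
- move=> c; rewrite mem_filter !mem_below.
  apply/idP/andP => [/mleP hc | [] //]; split; apply/mleP => // i.
  exact: leq_trans (hc i) (hb i).
Qed.

Lemma below_add (a c : mon) (F : mon -> K) : mle c a ->
  \sum_(d <- below (msub a c)) F (madd c d) = \sum_(b <- below a | mle c b) F b.
Proof.
move=> /mleP hc; rewrite -[RHS]big_filter -(big_map (madd c) xpredT); apply: eq_big_mem.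
- rewrite map_inj_in_uniq ?uniq_below // => x y _ _ E; apply/ffunP => i.
  have := congr1 (fun f : mon => f i) E; rewrite !ffunE; flia.
- by apply: filter_uniq; apply: uniq_below.
- move=> b; rewrite mem_filter mem_below; apply/mapP/andP.
  + case=> d; rewrite mem_below => /mleP hd ->; split; apply/mleP => i;
      rewrite !ffunE //; have := hd i; rewrite ffunE; have := hc i; flia.
  + case=> /mleP h1 /mleP h2; exists (msub b c).
      by rewrite mem_below; apply/mleP => i; rewrite !ffunE; have := h1 i; have := h2 i; flia.
    by apply/ffunP => i; rewrite !ffunE; have := h1 i; flia.
Qed.

Lemma ps_mulA : associative (@ps_mul K s).
Proof.
move=> f g h; apply: functional_extensionality => a; rewrite !mulE.
symmetry.
under eq_bigr do rewrite mulE big_distrl /=.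
rewrite big_seq.
under eq_bigr => b hb do (rewrite mem_below in hb; rewrite (below_sub _ hb)).
rewrite -big_seq (exchange_big_dep xpredT) //=.
rewrite big_seq [RHS]big_seq; apply: eq_bigr => c; rewrite mem_below => hc.
rewrite mulE big_distrr /= -(below_add _ hc); apply: eq_bigr => d _.
rewrite mulrA; congr (_ * g _ * h _); apply/ffunP => i; rewrite !ffunE; flia.
Qed.

Lemma mul_constE c (f : ps) a : ps_mul (ps_const c) f a = c * f a.
Proof.
rewrite mulE (bigD1_seq m0) ?uniq_below //; last first.
  by rewrite mem_below; apply/mleP => i; rewrite ffunE.
rewrite big1 ?addr0 => [|b /negbTE hb]; last by rewrite /ps_const /m0 hb mul0r.
rewrite /ps_const /m0 eqxx /= addr0; congr (_ * f _); apply/ffunP => i; rewrite !ffunE; flia.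
Qed.

Lemma ps_mul1 : left_id (@ps1 K s) (@ps_mul K s).
Proof. by move=> f; apply: functional_extensionality => a; rewrite mul_constE mul1r. Qed.

Lemma ps_mulDl : left_distributive (@ps_mul K s) (@ps_add K s).
Proof.
move=> f g h; apply: functional_extensionality => a.
by rewrite /ps_add !mulE -big_split; apply: eq_bigr => b _; rewrite mulrDl.
Qed.

Lemma ps_addA : associative (@ps_add K s).
Proof. by move=> f g h; apply: functional_extensionality => a; rewrite /ps_add addrA. Qed.
Lemma ps_addC : commutative (@ps_add K s).
Proof. by move=> f g; apply: functional_extensionality => a; rewrite /ps_add addrC. Qed.
Lemma ps_add0 : left_id (@ps0 K s) (@ps_add K s).
Proof. by move=> f; apply: functional_extensionality => a; rewrite /ps_add /ps0 add0r. Qed.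
Lemma ps_addN : left_inverse (@ps0 K s) (@ps_opp K s) (@ps_add K s).
Proof. by move=> f; apply: functional_extensionality => a; rewrite /ps_add /ps_opp /ps0 addNr. Qed.

End Ring.

HB.instance Definition _ (K : fieldType) (s : nat) := gen_eqMixin (ps K s).
HB.instance Definition _ (K : fieldType) (s : nat) := gen_choiceMixin (ps K s).
HB.instance Definition _ (K : fieldType) (s : nat) :=
  GRing.isZmodule.Build (ps K s) (@ps_addA K s) (@ps_addC K s) (@ps_add0 K s) (@ps_addN K s).

Lemma ps1_neq0 (K : fieldType) (s : nat) : (@ps1 K s) != (0 : ps K s).
Proof.
apply/eqP => E; have := congr1 (fun f : ps K s => f (m0 s)) E.
by rewrite /ps1 /ps_const eqxx => /eqP; rewrite oner_eq0.
Qed.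

HB.instance Definition _ (K : fieldType) (s : nat) :=
  GRing.Zmodule_isComNzRing.Build (ps K s) (@ps_mulA K s) (@ps_mulC K s)
    (@ps_mul1 K s) (@ps_mulDl K s) (@ps1_neq0 K s).

Section Test.
Variables (K : fieldType) (s : nat).
Check (ps K s : comRingType).
Lemma addE (f g : ps K s) : f + g = ps_add f g. Proof. by []. Qed.
Lemma mulE' (f g : ps K s) : f * g = ps_mul f g. Proof. by []. Qed.
Lemma oneE : (1 : ps K s) = @ps1 K s. Proof. by []. Qed.
Lemma zeroE : (0 : ps K s) = @ps0 K s. Proof. by []. Qed.
Lemma oppE (f : ps K s) : - f = ps_opp f. Proof. by []. Qed.
End Test.


Section Alg.
Variables (K : fieldType) (s : nat).
Local Notation R := (ps K s).

Lemma bigaddE (I : Type) (r : seq I) (P : pred I) (F : I -> R) :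
  \big[@ps_add K s/@ps0 K s]_(i <- r | P i) F i = \sum_(i <- r | P i) F i.
Proof. by []. Qed.
Lemma bigmulE (I : Type) (r : seq I) (P : pred I) (F : I -> R) :
  \big[@ps_mul K s/@ps1 K s]_(i <- r | P i) F i = \prod_(i <- r | P i) F i.
Proof. by []. Qed.

Lemma psmulE (f g : R) : ps_mul f g = f * g. Proof. by []. Qed.
Lemma psaddE (f g : R) : ps_add f g = f + g. Proof. by []. Qed.

Lemma ps_expE (f : R) n : ps_exp f n = f ^+ n.
Proof. by elim: n => [|n IH] //=; rewrite exprS -IH. Qed.

Lemma ps_constN1 : @ps_const K s (-1) = -1.
Proof.
apply: functional_extensionality => a; rewrite oppE /ps_opp /ps_const oneE /ps1 /ps_const.
by case: ifP; rewrite ?oppr0.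
Qed.

Lemma ps_detE t (M : 'M[R]_t) : ps_det M = \det M.
Proof.
rewrite /ps_det bigaddE /determinant; apply: eq_bigr => sg _.
rewrite bigmulE psmulE; congr (_ * _).
by case: (odd_perm sg); rewrite ?expr1 ?expr0 ?ps_constN1.
Qed.

Definition is_ideal (I : R -> Prop) :=
  [/\ I 0, (forall x y, I x -> I y -> I (x + y)) & (forall r x, I x -> I (r * x))].

Lemma ideal_opp (I : R -> Prop) x : is_ideal I -> I x -> I (- x).
Proof. by case=> _ _ hM hx; rewrite -mulN1r; apply: hM. Qed.

Lemma ideal_sub (I : R -> Prop) x y : is_ideal I -> I x -> I y -> I (x - y).
Proof. move=> hI hx hy; case: (hI) => _ hD _; apply: hD => //; exact: ideal_opp. Qed.

Lemma ideal_big (I : R -> Prop) (T : Type) (r : seq T) (P : pred T) (F : T -> R) :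
  is_ideal I -> (forall i, P i -> I (F i)) -> I (\sum_(i <- r | P i) F i).
Proof. by case=> h0 hD _ hF; apply: big_ind. Qed.

Lemma ideal_mulr (I : R -> Prop) r x : is_ideal I -> I x -> I (x * r).
Proof. by case=> _ _ hM hx; rewrite mulrC; apply: hM. Qed.

Lemma ideal_genE (gens : seq R) f :
  ideal_gen gens f <-> exists c : 'I_(size gens) -> R, f = \sum_(i < size gens) c i * gens`_i.
Proof. by []. Qed.

Lemma ideal_gen_ideal (gens : seq R) : is_ideal (ideal_gen gens).
Proof.
split.
- by exists (fun _ => 0); rewrite bigaddE big1 // => i _; rewrite psmulE mul0r.
- move=> x y [c ->] [d ->]; exists (fun i => c i + d i).
  by rewrite !bigaddE -big_split; apply: eq_bigr => i _; rewrite !psmulE mulrDl.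
- move=> r x [c ->]; exists (fun i => r * c i).
  by rewrite !bigaddE mulr_sumr; apply: eq_bigr => i _; rewrite !psmulE mulrA.
Qed.

Lemma ideal_gen_mem (gens : seq R) (x : R) : x \in gens -> ideal_gen gens x.
Proof.
move=> hx; have hi : (index x gens < size gens)%N by rewrite index_mem.
exists (fun i => if i == Ordinal hi then 1 else 0).
rewrite bigaddE (bigD1 (Ordinal hi)) //= eqxx big1 ?addr0.
  by rewrite psmulE mul1r nth_index.
by move=> i /negbTE ->; rewrite psmulE mul0r.
Qed.

Lemma ideal_gen_min (gens : seq R) (I : R -> Prop) : is_ideal I -> (forall x, x \in gens -> I x) ->
  forall f, ideal_gen gens f -> I f.
Proof.
move=> hI hg f [c ->]; rewrite bigaddE; apply: ideal_big => // i _.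
case: hI => _ _ hM; rewrite psmulE; apply: hM; apply: hg; exact: mem_nth.
Qed.

Lemma ideal_sum_ideal (I J : R -> Prop) : is_ideal I -> is_ideal J -> is_ideal (ideal_sum I J).
Proof.
move=> [i0 iD iM] [j0 jD jM]; split.
- by exists 0, 0; split => //; rewrite psaddE addr0.
- move=> x y [g [h [hg [hh ->]]]] [g' [h' [hg' [hh' ->]]]].
  exists (g + g'), (h + h'); split; [exact: iD| split; [exact: jD|]].
  by rewrite !psaddE addrACA.
- move=> r x [g [h [hg [hh ->]]]]; exists (r * g), (r * h); split; [exact: iM|split; [exact: jM|]].
  by rewrite !psaddE mulrDr.
Qed.

Lemma ideal_sumL (I J : R -> Prop) x : is_ideal J -> I x -> ideal_sum I J x.
Proof. by case=> j0 _ _ hx; exists x, 0; split => //; split => //; rewrite psaddE addr0. Qed.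
Lemma ideal_sumR (I J : R -> Prop) x : is_ideal I -> J x -> ideal_sum I J x.
Proof. by case=> i0 _ _ hx; exists 0, x; split => //; split => //; rewrite psaddE add0r. Qed.

End Alg.


Section Mx.
Variables (K : fieldType) (s : nat).
Local Notation R := (ps K s).

Lemma minor_mem m n (X : 'M[R]_(m, n)) (f : {ffun 'I_m -> 'I_m}) (g : {ffun 'I_m -> 'I_n}) :
  I_t m X (\det (\matrix_(i, j) X (f i) (g j))).
Proof.
apply: ideal_gen_mem; apply/allpairsP; exists (f, g); split; rewrite ?mem_enum //=.
by rewrite ps_detE.
Qed.

Lemma det_col m n (X : 'M[R]_(m, n)) (g : {ffun 'I_m -> 'I_n}) :
  \sum_(sg : 'S_m) (-1) ^+ sg * \prod_i X (sg i) (g i) =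
  \det (\matrix_(i, j) X ([ffun i => i] i) (g j)).
Proof.
rewrite -det_tr /determinant; apply: eq_bigr => sg _; congr (_ * _).
by apply: eq_bigr => i _; rewrite !mxE ffunE.
Qed.

Lemma det_mul_minors m n (X : 'M[R]_(m, n)) (C : 'M[R]_(n, m)) :
  I_t m X (\det (X *m C)).
Proof.
have -> : \det (X *m C) = \sum_(g : {ffun 'I_m -> 'I_n})
     (\prod_i C (g i) i) * \sum_(sg : 'S_m) (-1) ^+ sg * \prod_i X (sg i) (g i).
  have E : forall sg : 'S_m, \prod_i (X *m C)^T i (sg i) =
      \sum_(g : {ffun 'I_m -> 'I_n}) \prod_i (X (sg i) (g i) * C (g i) i).
    move=> sg; rewrite (eq_bigr (fun i => \sum_k X (sg i) k * C k i)).
      by rewrite bigA_distr_bigA.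
    by move=> i _; rewrite !mxE.
  rewrite -det_tr /determinant.
  under eq_bigr do rewrite E mulr_sumr.
  rewrite /= exchange_big /=; apply: eq_bigr => g _.
  rewrite mulr_sumr; apply: eq_bigr => sg _.
  by rewrite big_split /= [RHS]mulrC mulrA.
apply: ideal_big; first exact: ideal_gen_ideal.
move=> g _; case: (ideal_gen_ideal (minors m X)) => _ _ hM; apply: hM.
rewrite det_col; exact: minor_mem.
Qed.

Lemma minor_span m n (X : 'M[R]_(m, n)) (f : {ffun 'I_m -> 'I_m}) (g : {ffun 'I_m -> 'I_n}) p :
  exists c : 'I_n -> R, forall q,
    (if q == p then \det (\matrix_(i, j) X (f i) (g j)) else 0) = \sum_k c k * X q k.
Proof.
set S := \matrix_(i, j) X (f i) (g j).
case: (boolP (injectiveb f)) => [/injectiveP finj | /injectiveP fninj].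
  have [finv fK fKV] := injF_bij finj.
  pose l := finv p.
  exists (fun k => \sum_(j | g j == k) \adj S j l) => q.
  have hS : (S *m \adj S) (finv q) l = ((\det S)%:M : 'M[R]_m) (finv q) l by rewrite mul_mx_adj.
  rewrite /= !mxE in hS.
  under eq_bigr do rewrite mulr_suml.
  have -> : \sum_k \sum_(j | g j == k) \adj S j l * X q k = \sum_j \adj S j l * X q (g j).
    rewrite [RHS](partition_big g xpredT) //=; apply: eq_bigr => k _.
    by apply: eq_big => // j /eqP ->.
  have -> : (q == p) = (finv q == l).
    by apply/eqP/eqP => [-> //| E]; rewrite -(fKV q) -(fKV p) E.
  rewrite -mulrb -hS; apply: eq_bigr => j _.
  by rewrite mxE fKV mulrC.
have [i1 [i2 [ne e]]] : exists i1 i2, i1 != i2 /\ f i1 = f i2.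
  apply: contra_notP fninj => H x y exy; apply/eqP; apply: contraT => nxy.
  by case: H; exists x, y.
have -> : \det S = 0.
  by apply: (determinant_alternate ne) => j; rewrite !mxE e.
exists (fun _ => 0) => q; rewrite big1 ?if_same // => k _; exact: mul0r.
Qed.

Lemma prod_add_ideal (I : R -> Prop) (T : Type) (r : seq T) (a b : T -> R) :
  is_ideal I -> (forall i, I (a i)) ->
  I (\prod_(i <- r) (a i + b i) - \prod_(i <- r) b i).
Proof.
move=> hI ha; elim: r => [|x r IH]; first by rewrite !big_nil subrr; case: hI.
rewrite !big_cons.
have -> : (a x + b x) * \prod_(j <- r) (a j + b j) - b x * \prod_(j <- r) b j =
   a x * \prod_(j <- r) (a j + b j) + b x * (\prod_(j <- r) (a j + b j) - \prod_(j <- r) b j).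
  by rewrite mulrDl mulrBr addrA.
case: hI => _ hD hM; apply: hD; last exact: hM.
by rewrite mulrC; apply: hM.
Qed.

Lemma det_add_ideal (I : R -> Prop) m (W B : 'M[R]_m) :
  is_ideal I -> (forall i j, I (W i j)) -> I (\det (W + B) - \det B).
Proof.
move=> hI hW; rewrite /determinant -sumrB; apply: ideal_big => // sg _.
rewrite -mulrBr; case: (hI) => [h0 hD hM]; apply: hM.
under eq_bigr do rewrite mxE.
by apply: (@prod_add_ideal I _ _ (fun i => W i (sg i))) => // i.
Qed.

End Mx.


Section Main.
Variables (K : fieldType) (s m : nat) (A : 'I_m -> ps K s).
Variables (n : nat) (Theta : 'M[ps K s]_(m, n)).
Hypothesis hTheta : forall v : 'I_m -> ps K s,
      tangent_ext A v <-> exists c : 'I_n -> ps K s, v = col_comb Theta c.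
Local Notation R := (ps K s).

Definition spanX n' (X : 'M[R]_(m, n')) (v : 'I_m -> R) :=
  exists c : 'I_n' -> R, forall q, v q = \sum_k c k * X q k.

Lemma col_combE n' (X : 'M[R]_(m, n')) c q : col_comb X c q = \sum_k c k * X q k.
Proof. by []. Qed.

Lemma N_span v : tangent_ext A v <-> spanX Theta v.
Proof.
rewrite hTheta; split => [[c ->]|[c hc]]; exists c => //.
by apply: functional_extensionality => q; rewrite hc.
Qed.

Definition ev (r : R) (p : 'I_m) : 'I_m -> R := fun q => if q == p then r else 0.

Definition ann (r : R) := forall p, spanX Theta (ev r p).

Lemma ann_quotE r : ann_quot (tangent_ext A) r <-> ann r.
Proof.
split.
  move=> h p; apply/N_span.
  have -> : ev r p = vec_scale r (ev 1 p).
    apply: functional_extensionality => q; rewrite /vec_scale /ev psmulE.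
    by case: ifP; rewrite ?mulr1 ?mulr0.
  exact: h.
move=> h v; apply/N_span.
have [cc hcc] := choice h.
exists (fun k => \sum_p v p * cc p k) => q.
rewrite /vec_scale psmulE.
have -> : r * v q = \sum_p v p * ev r p q.
  rewrite (bigD1 q) //= big1 => [|p /negbTE hp]; last by rewrite /ev eq_sym hp mulr0.
  by rewrite /ev eqxx addr0 mulrC.
under eq_bigr do rewrite hcc mulr_sumr.
rewrite exchange_big /=; apply: eq_bigr => k _.
by rewrite mulr_suml; apply: eq_bigr => p _; rewrite mulrA.
Qed.

Lemma ann_ideal : is_ideal ann.
Proof.
split.
- move=> p; exists (fun _ => 0) => q; rewrite big1 ?/ev ?if_same // => k _; exact: mul0r.
- move=> x y hx hy p; case: (hx p) => c hc; case: (hy p) => d hd.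
  exists (fun k => c k + d k) => q.
  have -> : ev (x + y) p q = ev x p q + ev y p q by rewrite /ev; case: ifP; rewrite ?addr0.
  by rewrite hc hd -big_split; apply: eq_bigr => k _; rewrite mulrDl.
- move=> r x hx p; case: (hx p) => c hc; exists (fun k => r * c k) => q.
  have -> : ev (r * x) p q = r * ev x p q by rewrite /ev; case: ifP; rewrite ?mulr0.
  by rewrite hc mulr_sumr; apply: eq_bigr => k _; rewrite mulrA.
Qed.

Lemma ann_of_N r : (forall p, tangent_ext A (ev r p)) -> ann r.
Proof. by move=> h p; apply/N_span. Qed.

Lemma I1_ann f : I_1 A f -> ann f.
Proof.
apply: ideal_gen_min; first exact: ann_ideal.
move=> x /mapP [i _ ->]; apply: ann_of_N => p.
exists (ev (A i) p), (fun _ => 0); split.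
  move=> q; rewrite /ev; case: ifP => _.
    by apply: ideal_gen_mem; apply: map_f; rewrite mem_enum.
  by case: (ideal_gen_ideal [seq A i | i <- enum 'I_m]).
apply: functional_extensionality => q; rewrite /vec_add col_combE big1 ?psaddE ?addr0 //.
by move=> k _; rewrite mul0r.
Qed.

Lemma Jac_ann f : I_t m (Jac A) f -> ann f.
Proof.
apply: ideal_gen_min; first exact: ann_ideal.
move=> x /allpairsP [[f' g] [_ _ ->]] /=; rewrite ps_detE; apply: ann_of_N => p.
have [c hc] := minor_span (Jac A) f' g p.
exists (fun _ => 0), c; split.
  by move=> _; case: (ideal_gen_ideal [seq A i | i <- enum 'I_m]).
apply: functional_extensionality => q; rewrite /vec_add col_combE psaddE add0r.
by rewrite -hc.
Qed.

Lemma Theta_ann f : I_t m Theta f -> ann f.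
Proof.
apply: ideal_gen_min; first exact: ann_ideal.
move=> x /allpairsP [[f' g] [_ _ ->]] /=; rewrite ps_detE => p.
have [c hc] := minor_span Theta f' g p.
by exists c.
Qed.

Lemma ann_Theta r : ann r -> I_t m Theta (r ^+ m).
Proof.
move=> h; have [cc hcc] := choice h.
have E : Theta *m (\matrix_(k, p) cc p k) = r%:M.
  apply/matrixP => q p; rewrite !mxE mulrb.
  rewrite -/(ev r p q) hcc; apply: eq_bigr => k _; rewrite mxE mulrC.
  by [].
by rewrite -det_scalar -E; apply: det_mul_minors.
Qed.

Lemma ann_J r : ann r -> ideal_sum (I_1 A) (I_t m (Jac A)) (r ^+ m).
Proof.
move=> h.
have h' : forall p, exists wd : ('I_m -> R) * ('I_s -> R),
    (forall q, I_1 A (wd.1 q)) /\ ev r p = vec_add wd.1 (col_comb (Jac A) wd.2).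
  move=> p; have := h p => /N_span [w [d [hw e]]]; by exists (w, d).
have [wd hwd] := choice h'.
pose W : 'M[R]_m := \matrix_(q, p) (wd p).1 q.
pose D : 'M[R]_(s, m) := \matrix_(k, p) (wd p).2 k.
have E : r%:M = W + Jac A *m D.
  apply/matrixP => q p; rewrite !mxE mulrb -/(ev r p q).
  have [_ ->] := hwd p; rewrite /vec_add col_combE psaddE; congr (_ + _).
  by apply: eq_bigr => k _; rewrite [D _ _]mxE mulrC.
have -> : r ^+ m = (\det (W + Jac A *m D) - \det (Jac A *m D)) + \det (Jac A *m D).
  by rewrite subrK -E det_scalar.
exists (\det (W + Jac A *m D) - \det (Jac A *m D)), (\det (Jac A *m D)); split; last split.
- apply: det_add_ideal; first exact: ideal_gen_ideal.
  by move=> i j; rewrite mxE; case: (hwd j).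
- exact: det_mul_minors.
- by [].
Qed.

Lemma J_ann f : ideal_sum (I_1 A) (I_t m (Jac A)) f -> ann f.
Proof.
move=> [g [h [hg [hh ->]]]]; rewrite psaddE.
case: ann_ideal => _ hD _; apply: hD; [exact: I1_ann | exact: Jac_ann].
Qed.

Lemma rad1 f : radical (ideal_sum (I_1 A) (I_t m (Jac A))) f <-> radical (I_t m Theta) f.
Proof.
rewrite /radical; split => [[k hk]|[k hk]]; exists (k * m)%N;
  rewrite ps_expE exprM.
- by apply: ann_Theta; apply: J_ann; rewrite -ps_expE.
- by apply: ann_J; apply: Theta_ann; rewrite -ps_expE.
Qed.

Lemma rad2 f : radical (I_t m Theta) f <-> radical (ann_quot (tangent_ext A)) f.
Proof.
rewrite /radical; split => [[k hk]|[k hk]].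
- by exists k; apply/ann_quotE; apply: Theta_ann.
- exists (k * m)%N; rewrite ps_expE exprM; apply: ann_Theta.
  by rewrite -ps_expE; apply/ann_quotE.
Qed.

End Main.


Section Coef.
Variables (K : fieldType) (s : nat).
Local Notation R := (ps K s).
Local Notation mon := (mon s).

Definition cst (c : K) : R := ps_const c.
Definition msz (a : mon) : nat := (\sum_i a i)%N.

Lemma pcD (f g : R) a : (f + g) a = f a + g a. Proof. by []. Qed.
Lemma pcN (f : R) a : (- f) a = - f a. Proof. by []. Qed.
Lemma pcB (f g : R) a : (f - g) a = f a - g a. Proof. by []. Qed.
Lemma pc0 a : (0 : R) a = 0. Proof. by []. Qed.
Lemma pc_sum (I : Type) (r : seq I) (P : pred I) (F : I -> R) a :
  (\sum_(i <- r | P i) F i) a = \sum_(i <- r | P i) F i a.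
Proof. by apply: (big_morph (fun f : R => f a)). Qed.
Lemma pcC c (f : R) a : (cst c * f) a = c * f a.
Proof. exact: mul_constE. Qed.
Lemma pc1 a : (1 : R) a = (a == m0 s)%:R.
Proof. by rewrite oneE /ps1 /ps_const /m0; case: ifP. Qed.
Lemma cstE c a : cst c a = if a == m0 s then c else 0. Proof. by []. Qed.

Lemma cstD a b : cst (a + b) = cst a + cst b.
Proof. by apply: functional_extensionality => x; rewrite pcD !cstE; case: ifP; rewrite ?addr0. Qed.
Lemma cst0 : cst 0 = 0.
Proof. by apply: functional_extensionality => x; rewrite cstE pc0; case: ifP. Qed.
Lemma cst1 : cst 1 = 1. Proof. by []. Qed.
Lemma cstM a b : cst (a * b) = cst a * cst b.
Proof. by apply: functional_extensionality => x; rewrite pcC !cstE; case: ifP; rewrite ?mulr0. Qed.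
Lemma cst_sum (I : Type) (r : seq I) (P : pred I) (F : I -> K) :
  cst (\sum_(i <- r | P i) F i) = \sum_(i <- r | P i) cst (F i).
Proof. by apply: (big_morph cst cstD cst0). Qed.

Lemma below0 (F : mon -> K) : \sum_(b <- below (m0 s)) F b = F (m0 s).
Proof.
rewrite (@eq_big_mem _ _ _ [:: m0 s]) ?big_seq1 ?uniq_below //.
move=> b; rewrite mem_below inE; apply/mleP/eqP => [h|->] //.
  by apply/ffunP => i; have := h i; rewrite !ffunE; flia.
Qed.

Lemma pcM0 (f g : R) : (f * g) (m0 s) = f (m0 s) * g (m0 s).
Proof.
rewrite mulE' mulE below0; congr (_ * g _); apply/ffunP => i; rewrite !ffunE; flia.
Qed.

Lemma msub0 (a : mon) : msub a (m0 s) = a.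
Proof. by apply/ffunP => i; rewrite !ffunE; flia. Qed.

Lemma msz_sub (a b : mon) : mle b a -> msz (msub a b) = (msz a - msz b)%N.
Proof.
move=> /mleP h; apply/eqP; rewrite -(eqn_add2r (msz b)) subnK; last first.
  by apply: leq_sum => i _; apply: h.
rewrite /msz -big_split /=; apply/eqP; apply: eq_bigr => i _; rewrite ffunE.
by rewrite subnK // h.
Qed.

Lemma msz_gt0 (b : mon) : b != m0 s -> (0 < msz b)%N.
Proof.
apply: contraR; rewrite -eqn0Ngt /msz sum_nat_eq0 => /forallP h.
by apply/eqP/ffunP => i; rewrite ffunE; apply/eqP; apply: h.
Qed.

Lemma mle_msz (a b : mon) : mle b a -> (msz b <= msz a)%N.
Proof. by move=> /mleP h; apply: leq_sum => i _; apply: h. Qed.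

Lemma pow_vanish (h : R) : h (m0 s) = 0 ->
  forall k (a : mon), (msz a < k)%N -> (h ^+ k) a = 0.
Proof.
move=> h0; elim=> [//|k IH] a ha.
rewrite exprS mulE' mulE big_seq big1 // => b; rewrite mem_below => hb.
case: (eqVneq b (m0 s)) => [->|nb]; first by rewrite h0 mul0r.
rewrite IH ?mulr0 // msz_sub //; have := msz_gt0 nb; have := mle_msz hb; lia.
Qed.

Lemma unit_ps (u : R) : u (m0 s) != 0 -> exists w, u * w = 1.
Proof.
move=> hu; set c0 := u (m0 s).
pose h : R := 1 - cst c0^-1 * u.
have h0 : h (m0 s) = 0 by rewrite /h pcB pcC pc1 eqxx mulVf // subrr.
pose G (N : nat) : R := cst c0^-1 * \sum_(k < N.+1) h ^+ k.
have stab : forall c N, (msz c <= N)%N -> G N c = G (msz c) c.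
  move=> c N; elim: N => [|N IH] hN.
    by have -> : msz c = 0%N by lia.
  case: (ltnP (msz c) N.+1) => [hl|]; last by move=> hge; have -> : msz c = N.+1 by lia.
  rewrite -IH //; rewrite /G big_ord_recr /= mulrDr pcD.
  by rewrite [(cst _ * h ^+ _) _]pcC pow_vanish // mulr0 addr0.
pose w : R := fun a => G (msz a) a.
exists w; apply: functional_extensionality => a.
have -> : (u * w) a = (u * G (msz a)) a.
  rewrite !mulE' !mulE big_seq [RHS]big_seq; apply: eq_bigr => b.
  rewrite mem_below => hb; congr (_ * _); rewrite /w stab //.
  rewrite msz_sub //; lia.
have -> : u * G (msz a) = 1 - h ^+ (msz a).+1.
  rewrite /G mulrCA mulrA.
  have -> : cst c0^-1 * u = - (h - 1) by rewrite /h addrAC subrr add0r opprK.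
  by rewrite mulNr -subrX1 opprB.
by rewrite pcB pow_vanish // subr0.
Qed.

End Coef.


Section Var.
Variables (K : fieldType) (s : nat).
Local Notation R := (ps K s).
Local Notation mon := (mon s).

Definition unitv (j : 'I_s) : mon := [ffun i => nat_of_bool (i == j)].
Definition mE (j : 'I_s) (E : nat) : mon := [ffun i => if i == j then E else 0%N].
Definition xv (j : 'I_s) : R := ps_var K j.

Lemma var_mul j (g : R) a :
  (xv j * g) a = if (0 < a j)%N then g (msub a (unitv j)) else 0.
Proof.
rewrite mulE' mulE.
case: ifP => ha.
  rewrite (bigD1_seq (unitv j)) ?uniq_below //=; last first.
    rewrite mem_below; apply/mleP => i; rewrite ffunE.
    by case: (eqVneq i j) => [->|_].
  rewrite /xv /ps_var eqxx mul1r big1 ?addr0 // => b /negbTE hb.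
  by rewrite hb mul0r.
rewrite big_seq big1 // => b; rewrite mem_below => /mleP hb.
rewrite /xv /ps_var; case: eqP => [e|]; last by rewrite mul0r.
by have := hb j; rewrite e ffunE eqxx ha.
Qed.

Lemma varX_mul j E (g : R) a :
  (xv j ^+ E * g) a = if (E <= a j)%N then g (msub a (mE j E)) else 0.
Proof.
elim: E a => [|E IH] a.
  rewrite expr0 mul1r leq0n; congr g; apply/ffunP => i; rewrite !ffunE.
  by case: eqP; flia.
rewrite exprS -mulrA var_mul IH.
case: (ltnP 0 (a j)) => h0.
  rewrite [msub _ _ j]ffunE [unitv j j]ffunE eqxx /=.
  case: (leqP E (a j - 1)%N) => h1.
    have -> : (E < a j)%N by flia.
    congr g; apply/ffunP => i; rewrite !ffunE; case: (eqVneq i j) => [->|_] /=; flia.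
  by have -> : (E < a j)%N = false by flia.
by have -> : (E < a j)%N = false by flia.
Qed.

Lemma xv0 j : xv j (m0 s) = 0.
Proof.
rewrite /xv /ps_var; case: eqP => // /ffunP /(_ j); rewrite !ffunE eqxx //.
Qed.

Lemma varX0 j t : (xv j ^+ t) (m0 s) = (t == 0)%N%:R.
Proof.
elim: t => [|t IH]; first by rewrite expr0 pc1 eqxx.
by rewrite exprS pcM0 xv0 mul0r.
Qed.

Lemma box_decomp (E : nat) (f : R) :
  (forall a : mon, (forall i, (a i < E)%N) -> f a = 0) ->
  exists g : 'I_s -> R, f = \sum_j xv j ^+ E * g j.
Proof.
move=> hf.
pose g (j : 'I_s) : R := fun b =>
  let a := [ffun i => (b i + mE j E i)%N] in
  if [pick i | (E <= a i)%N] == Some j then f a else 0.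
exists g; apply: functional_extensionality => a; rewrite pc_sum.
under eq_bigr => j _ do rewrite varX_mul.
have ea : forall j, (E <= a j)%N -> [ffun i => (msub a (mE j E) i + mE j E i)%N] = a.
  move=> j hj; apply/ffunP => i; rewrite !ffunE; case: eqP => [->|]; flia.
case Epk: [pick i | (E <= a i)%N] => [j0|].
  have hj0 : (E <= a j0)%N by move: Epk; case: pickP => // x hx [<-].
  rewrite (bigD1 j0) //= hj0 /g /= ea // Epk eqxx big1 ?addr0 // => j hj.
  case: ifP => // hEj; rewrite ea // Epk; case: eqP => // [[e]].
  by move: hj; rewrite e eqxx.
have hn : forall i, ~~ (E <= a i)%N by move: Epk; case: pickP => // hn _ i; rewrite hn.
rewrite hf ?big1 // => [j _|i]; first by rewrite (negbTE (hn j)).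
by have := hn i; rewrite -ltnNge.
Qed.

End Var.


Section Box.
Variables (K : fieldType) (s : nat).
Local Notation R := (ps K s).
Local Notation mon := (mon s).

Lemma scaleE c (g : R) : ps_scale c g = cst c * g.
Proof. by apply: functional_extensionality => a; rewrite pcC. Qed.

Definition mono (x : mon) : R := fun b => if b == x then 1 else 0.

Definition boxL (E : nat) : seq mon :=
  map (fun b : {ffun 'I_s -> 'I_E} => [ffun i => nat_of_ord (b i)] : mon)
    (enum {ffun 'I_s -> 'I_E}).

Lemma boxL_uniq E : uniq (boxL E).
Proof.
rewrite map_inj_in_uniq; first by rewrite enumT; apply: index_enum_uniq.
move=> x y _ _ e; apply/ffunP => i; apply/val_inj; have := congr1 (fun f : mon => f i) e.
by rewrite !ffunE.
Qed.

Lemma mem_boxL E (a : mon) : (forall i, (a i < E)%N) -> a \in boxL E.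
Proof.
move=> h; apply/mapP; exists [ffun i => Ordinal (h i)]; first by rewrite mem_enum.
by apply/ffunP => i; rewrite !ffunE.
Qed.

Lemma findim_from_E (J : R -> Prop) E : is_ideal J -> (forall j, J (xv K j ^+ E)) ->
  findim_quot_ring J.
Proof.
move=> hJ hE.
set Lm := boxL E.
exists (map mono Lm) => f.
exists (fun i => f (nth (m0 s) Lm i)).
pose F (i : nat) : R := cst (f (nth (m0 s) Lm i)) * mono (nth (m0 s) Lm i).
have -> : \big[@ps_add K s/@ps0 K s]_(i < size (map mono Lm))
    ps_scale (f (nth (m0 s) Lm i)) (nth (@ps0 K s) (map mono Lm) i) = \sum_(x <- Lm) cst (f x) * mono x.
  rewrite bigaddE (eq_bigr (fun i : 'I_ _ => F i)); last first.
    move=> i _; rewrite scaleE (nth_map (m0 s)) //; rewrite -(size_map mono); exact: ltn_ord.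
  by rewrite -(big_mkord xpredT F) size_map (big_nth (m0 s)).
set P := \sum_(x <- Lm) _.
have [g hg] : exists g : 'I_s -> R, f - P = \sum_j xv K j ^+ E * g j.
  apply: box_decomp => a ha; rewrite pcB /P pc_sum.
  rewrite (bigD1_seq a) ?boxL_uniq ?mem_boxL //= big1 => [|x hx].
    by rewrite pcC /mono eqxx mulr1 addr0 subrr.
  by rewrite pcC /mono eq_sym (negbTE hx) mulr0.
rewrite psaddE -/(- P) -[ps_opp _]/(- P) hg.
by apply: ideal_big => // j _; apply: ideal_mulr.
Qed.

End Box.


Section Fin.
Variables (K : fieldType) (s m : nat) (A : 'I_m -> ps K s).
Variables (n : nat) (Theta : 'M[ps K s]_(m, n)).
Hypothesis hTheta : forall v : 'I_m -> ps K s,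
      tangent_ext A v <-> exists c : 'I_n -> ps K s, v = col_comb Theta c.
Local Notation R := (ps K s).

Lemma spanX_lin (T : Type) (r : seq T) (a : T -> R) (w : T -> 'I_m -> R) :
  (forall k, spanX Theta (w k)) -> spanX Theta (fun q => \sum_(k <- r) a k * w k q).
Proof.
move=> h; have [cc hcc] := choice h.
exists (fun t => \sum_(k <- r) a k * cc k t) => q.
under eq_bigr do rewrite hcc mulr_sumr.
rewrite exchange_big /=; apply: eq_bigr => t _.
by rewrite mulr_suml; apply: eq_bigr => k _; rewrite mulrA.
Qed.

Lemma nonzero_kernel (F : fieldType) (D : nat) (M : 'M[F]_(D.+1, D)) :
  exists u : 'rV[F]_D.+1, u != 0 /\ u *m M = 0.
Proof.
have : kermx M != 0.
  rewrite kermx_eq0 /row_free; apply/negP => /eqP h.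
  by have := rank_leq_col M; rewrite h ltnn.
move=> hk.
have [i hi] : exists i, row i (kermx M) != 0.
  apply/existsP; apply: contraR hk; rewrite negb_exists => /forallP h.
  apply/eqP/row_matrixP => i; rewrite row0; exact/eqP/negbNE/h.
exists (row i (kermx M)); split => //.
by rewrite -row_mul mulmx_ker row0.
Qed.

Lemma ev_sum (T : Type) (r : seq T) (a : T -> R) (g : T -> R) (p q : 'I_m) :
  \sum_(k <- r) a k * ev (g k) p q = ev (\sum_(k <- r) a k * g k) p q.
Proof.
rewrite /ev; case: ifP => _ //; rewrite big1 // => k _; exact: mulr0.
Qed.

Lemma vec_diffE (v w : 'I_m -> R) p : vec_diff v w p = v p - w p.
Proof. by []. Qed.

Lemma ann_power (j : 'I_s) : findim_quot_mod (tangent_ext A) ->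
  exists e, ann Theta (xv K j ^+ e).
Proof.
case=> L hL; set d := size L; set D := (m * d)%N.
have h1 : forall kp : 'I_D.+1 * 'I_m, exists c : 'I_d -> K,
  tangent_ext A (vec_diff (ev (xv K j ^+ kp.1) kp.2)
    (fun p => \big[@ps_add K s/@ps0 K s]_(i < d) ps_scale (c i) (nth (@vec0 K s m) L i p))).
  by move=> kp; apply: hL.
have [cc hcc] := choice h1.
pose M : 'M[K]_(D.+1, D) := \matrix_(k, i) (mxvec (\matrix_(p, l) cc (k, p) l) : 'rV_(m * d)) 0 i.
have [u [unz uM]] := nonzero_kernel M.
have rel : forall p l, \sum_k u 0 k * cc (k, p) l = 0.
  move=> p l; have := congr1 (fun X : 'rV_D => X 0 (mxvec_index p l)) uM; rewrite !mxE => E; apply: etrans E.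
  by apply: eq_bigr => k _; rewrite !mxE mxvecE mxE.
pose lam (k : nat) : K := oapp (fun k' => u 0 k') 0 (insub k : option 'I_D.+1).
have [k0 hk0] : exists k0 : 'I_D.+1, u 0 k0 != 0.
  apply/existsP; apply: contraR unz; rewrite negb_exists => /forallP h.
  by apply/eqP/matrixP => i k; rewrite mxE (ord1 i); apply/eqP/negbNE/h.
have exl : exists k, lam k != 0 by exists k0; rewrite /lam valK /=.
case: (ex_minnP exl) => e he hmin.
have eD : (e < D.+1)%N.
  case: (ltnP e D.+1) => // h; move: he; rewrite /lam insubN //= ?eqxx //.
  by rewrite -leqNgt.
have lam_lt : forall k : 'I_D.+1, (k < e)%N -> u 0 k = 0.
  move=> k hk; apply/eqP; apply: contraTT hk => hk; rewrite -leqNgt; apply: hmin.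
  by rewrite /lam valK.
set r := \sum_(k < D.+1) cst (u 0 k) * xv K j ^+ k.
have annr : ann Theta r.
  move=> p.
  have := @spanX_lin _ (index_enum 'I_D.+1) (fun k => cst (u 0 k))
    (fun k => vec_diff (ev (xv K j ^+ k) p)
       (fun p0 => \big[@ps_add K s/@ps0 K s]_(i < d) ps_scale (cc (k, p) i) (nth (@vec0 K s m) L i p0))).
  have -> : (fun q => \sum_(k <- index_enum 'I_D.+1) cst (u 0 k) *
      vec_diff (ev (xv K j ^+ k) p)
       (fun p0 => \big[@ps_add K s/@ps0 K s]_(i < d) ps_scale (cc (k, p) i) (nth (@vec0 K s m) L i p0)) q)
      = ev r p.
    apply: functional_extensionality => q.
    under eq_bigr do rewrite vec_diffE bigaddE mulrBr.
    rewrite sumrB ev_sum.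
    have -> : \sum_(k <- index_enum 'I_D.+1) cst (u 0 k) *
       \sum_(i < d) ps_scale (cc (k, p) i) (nth (@vec0 K s m) L i q) = 0.
      under eq_bigr do rewrite mulr_sumr.
      rewrite exchange_big big1 // => i _.
      under eq_bigr do rewrite scaleE mulrA -cstM.
      by rewrite -mulr_suml -cst_sum rel cst0 mul0r.
    by rewrite subr0.
  apply => k; apply/(N_span hTheta); exact: hcc (k, p).
pose u' := \sum_(k < D.+1) cst (u 0 k) * xv K j ^+ (k - e).
have ru : r = xv K j ^+ e * u'.
  rewrite /r /u' mulr_sumr; apply: eq_bigr => k _.
  case: (ltnP k e) => hk; first by rewrite lam_lt // cst0 !mul0r mulr0.
  by rewrite mulrCA -exprD subnKC.
have u0 : u' (m0 s) != 0.
  rewrite /u' pc_sum (bigD1 (Ordinal eD)) //= pcC varX0 subnn eqxx mulr1.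
  rewrite big1 ?addr0 //=; first by have := he; rewrite /lam insubT /=.
  move=> k hk; rewrite pcC varX0.
  case: (ltnP k e) => hke; first by rewrite lam_lt // mul0r.
  have : (k - e)%N != 0%N.
    rewrite subn_eq0 -ltnNge ltn_neqAle hke andbT; apply: contra hk => /eqP ek.
    by apply/eqP/val_inj.
  by move/negbTE ->; rewrite mulr0.
have [w hw] := unit_ps u0.
exists e.
have -> : xv K j ^+ e = w * r by rewrite ru mulrCA [w * u']mulrC hw mulr1.
by case: (ann_ideal Theta) => _ _ hM; apply: hM.
Qed.

End Fin.


Lemma sum_mul_split (V : nmodType) (G : nat -> V) (m d : nat) :
  \sum_(0 <= i < m * d) G i = \sum_(p < m) \sum_(l < d) G (p * d + l)%N.
Proof.
elim: m => [|m IH]; first by rewrite mul0n big_geq // big_ord0.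
rewrite big_ord_recr /= -IH mulSn addnC (big_cat_nat _ (leq_addr _ _)) //=.
congr (_ + _).
rewrite -{1}[(m * d)%N]add0n big_addn addKn big_mkord.
by apply: eq_bigr => l _; rewrite addnC.
Qed.

Section Fin2.
Variables (K : fieldType) (s m : nat) (A : 'I_m -> ps K s).
Variables (n : nat) (Theta : 'M[ps K s]_(m, n)).
Hypothesis hTheta : forall v : 'I_m -> ps K s,
      tangent_ext A v <-> exists c : 'I_n -> ps K s, v = col_comb Theta c.
Local Notation R := (ps K s).
Local Notation J := (ideal_sum (I_1 A) (I_t m (Jac A))).

Lemma J_ideal : is_ideal J.
Proof. by apply: ideal_sum_ideal; apply: ideal_gen_ideal. Qed.

Lemma exists_E : findim_quot_mod (tangent_ext A) -> exists E, forall j, J (xv K j ^+ E).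
Proof.
move=> hf.
have h : forall j, exists e, J (xv K j ^+ e).
  move=> j; have [e he] := ann_power hTheta j hf.
  by exists (e * m)%N; rewrite exprM; apply: (ann_J hTheta).
have [ef hef] := choice h.
exists (\max_j ef j)%N => j.
have le : (ef j <= \max_j ef j)%N by exact: leq_bigmax.
rewrite -(subnK le) exprD; case: J_ideal => _ _ hM; apply: hM; exact: hef.
Qed.

Lemma coordJ (w : 'I_m -> R) : (forall q, J (w q)) -> spanX Theta w.
Proof.
move=> hw.
have -> : w = fun q => \sum_(p <- index_enum 'I_m) 1 * ev (w p) p q.
  apply: functional_extensionality => q.
  rewrite (bigD1 q) //= big1 => [|p hp]; last by rewrite /ev eq_sym (negbTE hp) mulr0.
  by rewrite /ev eqxx mul1r addr0.
apply: (spanX_lin (index_enum _) (fun _ => 1) (w := fun p => ev (w p) p)) => p.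
exact: (J_ann hTheta).
Qed.

Lemma fin_back : findim_quot_ring J -> findim_quot_mod (tangent_ext A).
Proof.
case=> L hL; set d := size L.
pose L' : seq ('I_m -> R) := [seq (fun q : 'I_m => if val q == (i %/ d)%N then nth 0 L (i %% d) else 0)
   | i <- iota 0 (m * d)].
exists L' => v.
pose vn (p : nat) : R := oapp v 0 (insub p : option 'I_m).
have [cc hcc] := choice (fun p : nat => hL (vn p)).
pose cn (p l : nat) : K := oapp (cc p) 0 (insub l : option 'I_d).
exists (fun i : 'I_(size L') => cn (i %/ d)%N (i %% d)%N).
apply/(N_span hTheta); apply: coordJ => q.
rewrite vec_diffE bigaddE.
pose G (i : nat) : R := cst (cn (i %/ d)%N (i %% d)%N) *
   (if val q == (i %/ d)%N then nth 0 L (i %% d) else 0).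
have -> : \sum_(i < size L') ps_scale (cn (i %/ d)%N (i %% d)%N) (nth (@vec0 K s m) L' i q) =
    \sum_(i < size L') G i.
  apply: eq_bigr => i _; rewrite scaleE /G; congr (_ * _).
  have sz : size L' = (m * d)%N by rewrite size_map size_iota.
  have hi : (i < m * d)%N by rewrite -sz ltn_ord.
  by rewrite (nth_map 0%N) ?size_iota // nth_iota.
rewrite -(big_mkord xpredT G) size_map size_iota sum_mul_split.
have -> : \sum_(p < m) \sum_(l < d) G (p * d + l)%N = \sum_(l < d) cst (cc (val q) l) * nth 0 L l.
  rewrite (bigD1 q) //= [X in _ + X]big1 => [|p hp]; last first.
    apply: big1 => l _.
    have hd : (0 < d)%N by exact: (leq_ltn_trans (leq0n _) (ltn_ord l)).
    rewrite /G divnMDl // divn_small // addn0.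
    have -> : (val q == val p) = false by apply/negbTE; apply: contra hp => /eqP /val_inj ->.
    by rewrite mulr0.
  rewrite addr0; apply: eq_bigr => l _.
  have hd : (0 < d)%N by exact: (leq_ltn_trans (leq0n _) (ltn_ord l)).
  rewrite /G divnMDl // divn_small // addn0 modnMDl modn_small // eqxx /cn valK /=.
  by [].
have := hcc (val q); rewrite psaddE /vn valK /= bigaddE.
have -> : \sum_(l < d) cst (cc (val q) l) * nth 0 L l = \sum_(i < size L) ps_scale (cc (val q) i) (nth (@ps0 K s) L i).
  by apply: eq_bigr => l _; rewrite scaleE.
by [].
Qed.

End Fin2.

Local Close Scope ring_scope.
Unset Implicit Arguments. Set Strict Implicit.

Theorem mainTheorem4 (K : fieldType) (s m : nat) (A : 'I_m -> ps K s)
  (hA : forall i, in_maxideal (A i)) (hms : (m <= s)%N)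
  (n : nat) (Theta : 'M[ps K s]_(m, n))
  (hTheta : forall v : 'I_m -> ps K s,
      tangent_ext A v <-> exists c : 'I_n -> ps K s, v = col_comb Theta c) :
  (forall f, radical (ideal_sum (I_1 A) (I_t m (Jac A))) f <-> radical (I_t m Theta) f) /\
  (forall f, radical (I_t m Theta) f <-> radical (ann_quot (tangent_ext A)) f) /\
  (findim_quot_mod (tangent_ext A) <-> findim_quot_ring (ideal_sum (I_1 A) (I_t m (Jac A)))).
Proof.
split; first by move=> f; apply: rad1 hTheta f.
split; first by move=> f; apply: rad2 hTheta f.
split.
  move=> hf; have [E hE] := exists_E hTheta hf.
  exact: (findim_from_E (J_ideal A) hE).
exact: fin_back hTheta.
Qed.
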